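(* Let $\pi:(X,T)\to(Y,S)$ be a proximal extension of minimal topological dynamical systems. If $(Y,S)$ is not strongly $\mathcal{F}_t$-sensitive, then neither is $(X,T)$.
   Context: A topological dynamical system: compact metric space with continuous surjection; minimal means every orbit is dense. A proximal extension is a factor map $\pi$ ($\pi\circ T=S\circ\pi$, continuous surjective) such that every pair $(x,y)$ with $\pi(x)=\pi(y)$ is proximal, i.e. $\inf_n d(T^nx,T^ny)=0$. A set $F\subset\mathbb{Z}_+$ is thick if it contains arbitrarily long blocks of consecutive integers. A system $(X,T)$ is strongly $\mathcal{F}_t$-sensitive if there is $\delta>0$ such that for each nonempty open $U$ there are $x,y\in U$ with $\{n\in\mathbb{Z}_+:d(T^nx,T^ny)>\delta\}$ thick. *)

(* Defs.v *)
From Stdlib Require Import Reals Lra Lia.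
Open Scope R_scope.

Record is_metric {X : Type} (d : X -> X -> R) : Prop := {
  metric_nonneg : forall x y, 0 <= d x y;
  metric_eq0 : forall x y, d x y = 0 <-> x = y;
  metric_sym : forall x y, d x y = d y x;
  metric_tri : forall x y z, d x z <= d x y + d y z
}.

Definition mopen {X : Type} (d : X -> X -> R) (U : X -> Prop) : Prop :=
  forall x, U x -> exists eps, 0 < eps /\ forall y, d x y < eps -> U y.

Definition mcompact {X : Type} (d : X -> X -> R) : Prop :=
  forall (I : Type) (U : I -> X -> Prop),
    (forall i, mopen d (U i)) -> (forall x, exists i, U i x) ->
    exists l : list I, forall x, exists i, List.In i l /\ U i x.

Definition mcontinuous {X Y : Type} (dX : X -> X -> R) (dY : Y -> Y -> R)
  (f : X -> Y) : Prop :=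
  forall x eps, 0 < eps -> exists delta, 0 < delta /\
    forall y, dX x y < delta -> dY (f x) (f y) < eps.

Definition surjective {X Y : Type} (f : X -> Y) : Prop :=
  forall y, exists x, f x = y.

Definition TDS {X : Type} (d : X -> X -> R) (T : X -> X) : Prop :=
  is_metric d /\ mcompact d /\ mcontinuous d d T /\ surjective T.

Definition minimal {X : Type} (d : X -> X -> R) (T : X -> X) : Prop :=
  forall x y eps, 0 < eps -> exists n : nat, d (Nat.iter n T x) y < eps.

Definition factor_map {X Y : Type} (dX : X -> X -> R) (T : X -> X)
  (dY : Y -> Y -> R) (S : Y -> Y) (pi : X -> Y) : Prop :=
  mcontinuous dX dY pi /\ surjective pi /\ (forall x, pi (T x) = S (pi x)).

Definition proximal {X : Type} (d : X -> X -> R) (T : X -> X) (x y : X) : Prop :=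
  forall eps, 0 < eps -> exists n : nat,
    d (Nat.iter n T x) (Nat.iter n T y) < eps.

Definition proximal_extension {X Y : Type} (dX : X -> X -> R) (T : X -> X)
  (dY : Y -> Y -> R) (S : Y -> Y) (pi : X -> Y) : Prop :=
  factor_map dX T dY S pi /\
  forall x y, pi x = pi y -> proximal dX T x y.

Definition thick (F : nat -> Prop) : Prop :=
  forall L : nat, exists a : nat, forall i, (i < L)%nat -> F (a + i)%nat.

Definition strongly_Ft_sensitive {X : Type} (d : X -> X -> R) (T : X -> X) : Prop :=
  exists delta, 0 < delta /\
    forall U : X -> Prop, mopen d U -> (exists u, U u) ->
      exists x y, U x /\ U y /\
        thick (fun n => d (Nat.iter n T x) (Nat.iter n T y) > delta).

(* Main.v *)
Require Import Defs.
From Stdlib Require Import Reals.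
From Stdlib Require Import Lra Lia ClassicalEpsilon Classical List.
Open Scope R_scope.

Lemma iter_comm {X Y : Type} (T : X -> X) (S : Y -> Y) (pi : X -> Y) :
  (forall x, pi (T x) = S (pi x)) ->
  forall n x, pi (Nat.iter n T x) = Nat.iter n S (pi x).
Proof.
  intros H n; induction n as [|n IH]; intros x; simpl; auto.
  rewrite H, IH; reflexivity.
Qed.

Lemma iter_cont {X : Type} (d : X -> X -> R) (T : X -> X) :
  mcontinuous d d T -> forall n, mcontinuous d d (Nat.iter n T).
Proof.
  intros HT n; induction n as [|n IH]; intros x eps Heps; simpl.
  - exists eps; split; auto.
  - destruct (HT (Nat.iter n T x) eps Heps) as [e [He Hc]].
    destruct (IH x e He) as [e' [He' Hc']].
    exists e'; split; auto.
Qed.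

Lemma tri3 {X : Type} (d : X -> X -> R) (Hm : is_metric d) x y z w :
  d x w <= d x y + d y z + d z w.
Proof.
  pose proof (metric_tri d Hm x y w). pose proof (metric_tri d Hm y z w). lra.
Qed.

Lemma dxx {X : Type} (d : X -> X -> R) (Hm : is_metric d) x : d x x = 0.
Proof. apply (proj2 (metric_eq0 d Hm x x)); reflexivity. Qed.

Definition maxl {I : Type} (g : I -> nat) (l : list I) : nat :=
  fold_right (fun i acc => Nat.max (g i) acc) 0%nat l.

Lemma maxl_in {I : Type} (g : I -> nat) l i : In i l -> (g i <= maxl g l)%nat.
Proof.
  induction l as [|a l IH]; simpl; [tauto|].
  intros [->|H]; [lia|]. specialize (IH H). lia.
Qed.

Lemma cluster {X : Type} (d : X -> X -> R) (Hm : is_metric d) (Hc : mcompact d)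
  (x : nat -> X) : exists p, forall r, 0 < r -> forall N,
    exists j, (N <= j)%nat /\ d (x j) p < r.
Proof.
  apply NNPP; intro Hn.
  assert (H : forall p, exists r N, 0 < r /\ forall j, (N <= j)%nat -> r <= d (x j) p).
  { intro p. apply NNPP; intro H1. apply Hn. exists p. intros r Hr N.
    apply NNPP; intro H2. apply H1. exists r, N. split; auto.
    intros j Hj. apply Rnot_lt_le. intro H3. apply H2. exists j; auto. }
  pose (I := {p : X & {r : R & {N : nat | 0 < r /\ forall j, (N <= j)%nat -> r <= d (x j) p}}}).
  pose (U := fun (i : I) (y : X) => d (projT1 i) y < projT1 (projT2 i)).
  destruct (Hc I U) as [l Hl].
  - intros [p [r [N [Hr HN]]]] y Hy. unfold U in *; simpl in *.
    exists (r - d p y); split; [lra|]. intros z Hz.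
    pose proof (metric_tri d Hm p y z). lra.
  - intro y. destruct (H y) as [r [N [Hr HN]]].
    exists (existT _ y (existT _ r (exist _ N (conj Hr HN)))).
    unfold U; simpl. rewrite dxx; auto.
  - pose (g := fun i : I => proj1_sig (projT2 (projT2 i))).
    destruct (Hl (x (maxl g l))) as [i [Hi Hu]].
    pose proof (maxl_in g l i Hi) as Hle.
    destruct i as [p [r [N [Hr HN]]]]. unfold U, g in *; simpl in *.
    pose proof (HN _ Hle) as HN'. rewrite (metric_sym d Hm) in HN'. lra.
Qed.

Lemma inv_small (e : R) : 0 < e -> exists N : nat, / (INR N + 1) < e.
Proof.
  intro He. destruct (archimed_cor1 e He) as [N [HN HN0]].
  exists N. assert (0 < INR N) by (apply lt_0_INR; lia).
  apply Rle_lt_trans with (/ INR N); auto.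
  apply Rinv_le_contravar; lra.
Qed.

Lemma inv_mono (k N : nat) : (N <= k)%nat -> / (INR k + 1) <= / (INR N + 1).
Proof.
  intro H. apply Rinv_le_contravar. pose proof (pos_INR N); lra.
  apply le_INR in H; lra.
Qed.

Lemma inv_pos (k : nat) : 0 < / (INR k + 1).
Proof. apply Rinv_0_lt_compat. pose proof (pos_INR k); lra. Qed.

Lemma key (X Y : Type) (dX : X -> X -> R) (T : X -> X)
  (dY : Y -> Y -> R) (S : Y -> Y) (pi : X -> Y) :
  TDS dX T -> TDS dY S -> proximal_extension dX T dY S pi ->
  forall delta, 0 < delta ->
  exists eps M, 0 < eps /\ forall a b,
    (forall n, (n < M)%nat -> dX (Nat.iter n T a) (Nat.iter n T b) > delta) ->
    eps <= dY (pi a) (pi b).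
Proof.
  intros [HmX [HcX [HTc _]]] [HmY _] [[Hpic _] Hprox] delta Hdelta.
  apply NNPP; intro Hn.
  assert (Hj : forall j : nat, exists ab : X * X,
    (forall n, (n < j)%nat -> dX (Nat.iter n T (fst ab)) (Nat.iter n T (snd ab)) > delta)
    /\ dY (pi (fst ab)) (pi (snd ab)) < / (INR j + 1)).
  { intro j. apply NNPP; intro H1. apply Hn. exists (/ (INR j + 1)), j.
    split; [apply inv_pos|]. intros a b Hab. apply Rnot_lt_le; intro H2.
    apply H1. exists (a, b). simpl; auto. }
  pose (f := fun j => proj1_sig (constructive_indefinite_description _ (Hj j))).
  assert (Hf : forall j,
    (forall n, (n < j)%nat -> dX (Nat.iter n T (fst (f j))) (Nat.iter n T (snd (f j))) > delta)
    /\ dY (pi (fst (f j))) (pi (snd (f j))) < / (INR j + 1)).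
  { intro j. unfold f. exact (proj2_sig (constructive_indefinite_description _ (Hj j))). }
  clearbody f. clear Hj.
  destruct (cluster dX HmX HcX (fun j => fst (f j))) as [p Hp].
  assert (Hs : forall k, exists j, (k <= j)%nat /\ dX (fst (f j)) p < / (INR k + 1)).
  { intro k. apply Hp. apply inv_pos. }
  pose (sg := fun k => proj1_sig (constructive_indefinite_description _ (Hs k))).
  assert (Hsg : forall k, (k <= sg k)%nat /\ dX (fst (f (sg k))) p < / (INR k + 1)).
  { intro k. unfold sg. exact (proj2_sig (constructive_indefinite_description _ (Hs k))). }
  clearbody sg. clear Hs.
  destruct (cluster dX HmX HcX (fun k => snd (f (sg k)))) as [q Hq].
  assert (Hpq : pi p = pi q).
  { apply (proj1 (metric_eq0 dY HmY _ _)).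
    pose proof (metric_nonneg dY HmY (pi p) (pi q)) as H0.
    destruct (Req_dec (dY (pi p) (pi q)) 0) as [E|E]; auto. exfalso.
    set (D := dY (pi p) (pi q)) in *.
    assert (He : 0 < D / 3) by lra.
    destruct (Hpic p _ He) as [e1 [He1 Hc1]].
    destruct (Hpic q _ He) as [e2 [He2 Hc2]].
    destruct (inv_small (Rmin e1 (D/3))) as [N1 HN1].
    { apply Rmin_pos; lra. }
    destruct (Hq e2 He2 N1) as [k [Hk Hbk]].
    destruct (Hsg k) as [Hkj Hak].
    pose proof (inv_mono _ _ Hk).
    pose proof (Rmin_l e1 (D/3)). pose proof (Rmin_r e1 (D/3)).
    assert (A1 : dY (pi p) (pi (fst (f (sg k)))) < D/3).
    { apply Hc1. rewrite (metric_sym dX HmX). lra. }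
    assert (A2 : dY (pi q) (pi (snd (f (sg k)))) < D/3).
    { apply Hc2. rewrite (metric_sym dX HmX). lra. }
    destruct (Hf (sg k)) as [_ A3].
    pose proof (inv_mono _ _ Hkj).
    pose proof (tri3 dY HmY (pi p) (pi (fst (f (sg k)))) (pi (snd (f (sg k)))) (pi q)).
    rewrite (metric_sym dY HmY (pi (snd (f (sg k))))) in H4.
    unfold D in *. lra. }
  destruct (Hprox p q Hpq (delta) Hdelta) as [n Hn'].
  set (D0 := dX (Nat.iter n T p) (Nat.iter n T q)) in *.
  assert (He : 0 < (delta - D0) / 2) by lra.
  destruct (iter_cont dX T HTc n p _ He) as [e1 [He1 Hc1]].
  destruct (iter_cont dX T HTc n q _ He) as [e2 [He2 Hc2]].
  destruct (inv_small e1 He1) as [N1 HN1].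
  destruct (Hq e2 He2 (Nat.max N1 (n+1)%nat)) as [k [Hk Hbk]].
  destruct (Hsg k) as [Hkj Hak].
  assert (HN1k : (N1 <= k)%nat) by lia.
  pose proof (inv_mono _ _ HN1k).
  assert (A1 : dX (Nat.iter n T p) (Nat.iter n T (fst (f (sg k)))) < (delta - D0)/2).
  { apply Hc1. rewrite (metric_sym dX HmX). lra. }
  assert (A2 : dX (Nat.iter n T q) (Nat.iter n T (snd (f (sg k)))) < (delta - D0)/2).
  { apply Hc2. rewrite (metric_sym dX HmX). lra. }
  destruct (Hf (sg k)) as [A3 _].
  assert (Hn1 : (n < sg k)%nat) by lia.
  specialize (A3 n Hn1).
  pose proof (tri3 dX HmX (Nat.iter n T (fst (f (sg k)))) (Nat.iter n T p)
                (Nat.iter n T q) (Nat.iter n T (snd (f (sg k))))).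
  rewrite (metric_sym dX HmX (Nat.iter n T (fst (f (sg k)))) (Nat.iter n T p)) in H0.
  unfold D0 in *. lra.
Qed.

Theorem proposition5p1 (X Y : Type) (dX : X -> X -> R) (T : X -> X)
  (dY : Y -> Y -> R) (S : Y -> Y) (pi : X -> Y) :
  TDS dX T -> minimal dX T ->
  TDS dY S -> minimal dY S ->
  proximal_extension dX T dY S pi ->
  ~ strongly_Ft_sensitive dY S ->
  ~ strongly_Ft_sensitive dX T.
Proof.
  intros HX _ HY _ Hpe HnY [delta [Hdelta HU]].
  destruct (key X Y dX T dY S pi HX HY Hpe delta Hdelta) as [eps [M [Heps Hkey]]].
  destruct Hpe as [[Hpic [Hpis Hcomm]] _].
  apply HnY. exists (eps / 2). split; [lra|]. intros V HV [v Hv].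
  destruct (HU (fun x => V (pi x))) as [x1 [x2 [H1 [H2 Hth]]]].
  - intros x Hx. destruct (HV _ Hx) as [e [He HVe]].
    destruct (Hpic x e He) as [eta [Heta Hc]].
    exists eta. split; auto.
  - destruct (Hpis v) as [x Hx]. exists x. rewrite Hx; auto.
  - exists (pi x1), (pi x2). split; auto. split; auto.
    intros L. destruct (Hth (L + M)%nat) as [a Ha]. exists a.
    intros i Hi. rewrite <- !(iter_comm T S pi Hcomm).
    assert (eps <= dY (pi (Nat.iter (a + i) T x1)) (pi (Nat.iter (a + i) T x2))).
    { apply Hkey. intros n Hn. rewrite <- !Nat.iter_add.
      replace (n + (a + i))%nat with (a + (i + n))%nat by lia.
      apply Ha. lia. }
    lra.
Qed.
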